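(* Let $A$ be a basic finite-dimensional associative algebra over an algebraically closed field, $e$ an idempotent of $A$, and $f$ a primitive idempotent which is a direct summand of $e$ (i.e. $e=f+e'$ with $e'$ an idempotent orthogonal to $f$). Assume there exist two non-isomorphic, non-simple finite-dimensional $A$-modules $M$ and $N$ such that (1) both $M$ and $N$ have simple top and simple socle, each isomorphic to the simple $A$-module $L^A(f)$ corresponding to $f$; and (2) $e\,(\mathrm{rad}(M)/\mathrm{soc}(M))=e\,(\mathrm{rad}(N)/\mathrm{soc}(N))=0$. Then $\dim\mathrm{Ext}^1_{eAe}(L^{eAe}(f),L^{eAe}(f))>1$, where $L^{eAe}(f)$ is the simple $eAe$-module corresponding to $f$. *)

(* Defs.v *)
From HB Require Import structures.
From mathcomp Require Import all_boot all_order all_algebra all_field.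
Set Implicit Arguments. Unset Strict Implicit. Unset Printing Implicit Defensive.
Import Order.TTheory GRing.Theory.
Local Open Scope ring_scope.

(* A finite-dimensional LEFT module over the corner algebra eAe (for an element
   e of A, in practice an is_idem) is given by a matrix representation on
   row vectors 'rV[K]_n: the element a of eAe acts by v |-> v *m cact a.
   Because composition of maps acting on the right is reversed, the left-module
   axiom (ab).v = a.(b.v) reads cact (a*b) = cact b *m cact a.
   The representation is defined on all of A but only depends on e*a*e.
   A-modules are the case e = 1. *)
Record cmod (K : fieldType) (A : falgType K) (e : A) := CMod {
  cdim : nat;
  cact : A -> 'M[K]_cdim;
  cact_corner : forall a, cact a = cact (e * a * e);
  cact_lin : forall (k : K) (a b : A),
      cact (k *: (e * a * e) + e * b * e) = k *: cact (e * a * e) + cact (e * b * e);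
  cact_unit : cact e = 1%:M;
  cact_mul : forall a b : A,
      cact ((e * a * e) * (e * b * e)) = cact (e * b * e) *m cact (e * a * e)
}.

Section Mods.
Variables (K : fieldType) (A : falgType K) (e : A).
Implicit Types (M N : cmod e).

(* submodules are represented by (the row space of) square matrices *)
Definition submod M (U : 'M[K]_(cdim M)) : Prop :=
  forall a : A, (U *m cact M a <= U)%MS.

Definition simple_mod M : Prop :=
  (0 < cdim M)%N /\
  forall U : 'M[K]_(cdim M), submod U -> U = 0 \/ row_full U.

Definition max_submod M (U : 'M[K]_(cdim M)) : Prop :=
  submod U /\ ~~ row_full U /\
  forall V : 'M[K]_(cdim M), submod V -> (U <= V)%MS -> (V <= U)%MS \/ row_full V.

Definition simple_submod M (U : 'M[K]_(cdim M)) : Prop :=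
  submod U /\ U != 0 /\
  forall V : 'M[K]_(cdim M), submod V -> (V <= U)%MS -> V = 0 \/ (U <= V)%MS.

Definition is_rad M (R : 'M[K]_(cdim M)) : Prop :=
  forall v : 'rV[K]_(cdim M), (v <= R)%MS <-> (forall U, max_submod U -> (v <= U)%MS).

Definition is_soc M (S : 'M[K]_(cdim M)) : Prop :=
  forall v : 'rV[K]_(cdim M), (v <= S)%MS <->
    exists (k : nat) (vs : 'I_k -> 'rV[K]_(cdim M)),
      v = \sum_(i < k) vs i /\
      forall i, exists U : 'M[K]_(cdim M), simple_submod U /\ (vs i <= U)%MS.

Definition mod_iso M N : Prop :=
  exists P : 'M[K]_(cdim M, cdim N),
    [/\ row_free P, row_full P & forall a : A, cact M a *m P = P *m cact N a].

(* Ext^1_{eAe}(V, W) computed as derivations modulo inner derivations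
   (Hochschild description): an extension 0 -> W -> E -> V -> 0 of
   eAe-modules is E = W (+) V with a.(w,v) = (w *m cact W a + v *m D a, v *m cact V a),
   D a : 'M_(dim V, dim W); associativity <-> derivation rule below,
   equivalence of extensions <-> differing by an inner derivation. *)
Definition is_der (V W : cmod e) (D : A -> 'M[K]_(cdim V, cdim W)) : Prop :=
  (forall (k : K) (a b : A),
      D (k *: (e * a * e) + e * b * e) = k *: D (e * a * e) + D (e * b * e)) /\
  (forall a b : A,
      D ((e * a * e) * (e * b * e)) =
        D (e * b * e) *m cact W (e * a * e) + cact V (e * b * e) *m D (e * a * e)).

Definition is_inner_der (V W : cmod e) (D : A -> 'M[K]_(cdim V, cdim W)) : Prop :=
  exists X : 'M[K]_(cdim V, cdim W),
    forall a : A, D (e * a * e) = cact V (e * a * e) *m X - X *m cact W (e * a * e).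

Definition ext1_dim_gt1 (V W : cmod e) : Prop :=
  exists D1 D2 : A -> 'M[K]_(cdim V, cdim W),
    [/\ is_der D1, is_der D2 &
      forall c1 c2 : K, is_inner_der (fun a => c1 *: D1 a + c2 *: D2 a) ->
        c1 = 0 /\ c2 = 0].

End Mods.

Definition is_idem (K : fieldType) (A : falgType K) (x : A) : Prop := x * x = x.

Definition primitive_idempotent (K : fieldType) (A : falgType K) (f : A) : Prop :=
  [/\ is_idem f, f != 0 &
    forall f1 f2 : A, is_idem f1 -> is_idem f2 -> f1 * f2 = 0 -> f2 * f1 = 0 ->
      f = f1 + f2 -> f1 = 0 \/ f2 = 0].

(* Basic algebra over an algebraically closed field: every simple A-module is
   one-dimensional (equivalently A / rad A is a product of copies of K). *)
Definition basic_alg (K : fieldType) (A : falgType K) : Prop :=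
  forall S : cmod (1 : A), simple_mod S -> cdim S = 1%N.

(* M has simple top isomorphic to L^A(f), simple socle isomorphic to L^A(f), and
   e (rad M / soc M) = 0.  A simple module T is isomorphic to L^A(f) iff f T <> 0. *)
Definition lemma8_cond (K : fieldType) (A : falgType K) (e f : A) (M : cmod (1 : A)) : Prop :=
  exists (R S : 'M[K]_(cdim M)),
    [/\ is_rad R, is_soc S,
        max_submod R /\ ~~ (cact M f <= R)%MS,
        simple_submod S /\ S *m cact M f != 0 &
        (R *m cact M e <= S)%MS].

(* Main.v *)
Require Import Defs.
From HB Require Import structures.
From mathcomp Require Import all_boot all_order all_algebra all_field.
From Stdlib Require Import Classical Lia.
From mathcomp Require Import zify ring.
Set Implicit Arguments. Unset Strict Implicit. Unset Printing Implicit Defensive.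
Import Order.TTheory GRing.Theory.
Import VectorInternalTheory.
Local Open Scope ring_scope.

Section Gen.
Variables (K : fieldType) (A : falgType K).

Section OneMod.
Variable (M : cmod (1 : A)).
Local Notation n := (cdim M).
Local Notation ca := (cact M).

Lemma cact1 : ca 1 = 1%:M.
Proof. exact: cact_unit. Qed.

Lemma cactM a b : ca (a * b) = ca b *m ca a.
Proof. by have := cact_mul M a b; rewrite !mul1r !mulr1. Qed.

Lemma cactDZ k a b : ca (k *: a + b) = k *: ca a + ca b.
Proof. by have := cact_lin M k a b; rewrite !mul1r !mulr1. Qed.

Lemma cact0 : ca 0 = 0.
Proof. by have := cactDZ (-1) 1 1; rewrite scaleN1r addNr => ->; rewrite scaleN1r addNr. Qed.

Lemma cactD a b : ca (a + b) = ca a + ca b.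
Proof. by have := cactDZ 1 a b; rewrite !scale1r. Qed.

Lemma cactZ k a : ca (k *: a) = k *: ca a.
Proof. by have := cactDZ k a 0; rewrite !addr0 cact0 addr0. Qed.

Lemma cactN a : ca (- a) = - ca a.
Proof. by rewrite -scaleN1r cactZ scaleN1r. Qed.

Lemma cactB a b : ca (a - b) = ca a - ca b.
Proof. by rewrite cactD cactN. Qed.

Variables (k : nat) (B : 'M[K]_(k, n)) (P : 'M[K]_(n, k)).
Hypothesis hBP : B *m P = 1%:M.
Hypothesis hmul : forall a b,
  B *m ca b *m ca a *m P = B *m ca b *m P *m (B *m ca a *m P).

Definition sq_act (a : A) := B *m ca a *m P.

Fact sq_corner a : sq_act a = sq_act (1 * a * 1).
Proof. by rewrite mul1r mulr1. Qed.
Fact sq_lin (c : K) (a b : A) :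
  sq_act (c *: (1 * a * 1) + 1 * b * 1) = c *: sq_act (1 * a * 1) + sq_act (1 * b * 1).
Proof. by rewrite /sq_act !mul1r !mulr1 cactDZ mulmxDr mulmxDl -scalemxAr -scalemxAl. Qed.
Fact sq_unit : sq_act 1 = 1%:M.
Proof. by rewrite /sq_act cact1 mulmx1. Qed.
Fact sq_mul (a b : A) : sq_act ((1 * a * 1) * (1 * b * 1)) = sq_act (1 * b * 1) *m sq_act (1 * a * 1).
Proof. by rewrite /sq_act !mul1r !mulr1 cactM mulmxA hmul. Qed.

Definition sqmod : cmod (1 : A) := @CMod K A 1 k sq_act sq_corner sq_lin sq_unit sq_mul.

End OneMod.
End Gen.

Section Sub.
Variables (K : fieldType) (A : falgType K).
Variable (M : cmod (1 : A)).
Local Notation n := (cdim M).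
Local Notation ca := (cact M).
Variable U : 'M[K]_n.
Hypothesis hU : simple_submod U.

Let B := row_base U.
Let P := pinvmx B.
Lemma sub_BP : B *m P = 1%:M.
Proof. exact: mulmxVp (row_base_free U). Qed.

Lemma subBca b : (B *m ca b <= B)%MS.
Proof.
rewrite (eq_row_base U); apply: submx_trans (proj1 hU b).
by apply: submxMr; rewrite (eq_row_base U).
Qed.

Lemma sub_mul a b : B *m ca b *m ca a *m P = B *m ca b *m P *m (B *m ca a *m P).
Proof. by rewrite [RHS]mulmxA [in RHS]mulmxA (mulmxKpV (subBca b)). Qed.

Definition subcmod := sqmod sub_BP sub_mul.

Lemma sub_simple : simple_mod subcmod.
Proof.
case: hU => hsub [hnz hmin]; split.
  by rewrite /= lt0n mxrank_eq0.
move=> V hV.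
have hVB : submod <<V *m B>>%MS.
  move=> a; rewrite (eqmxMr _ (genmxE _)) genmxE.
  have -> : V *m B *m ca a = V *m sq_act B P a *m B.
    by rewrite /sq_act -[RHS]mulmxA (mulmxKpV (subBca a)) -mulmxA.
  exact: submxMr (hV a).
have hle : (<<V *m B>> <= U)%MS.
  by rewrite genmxE -(eq_row_base U) submxMl.
case: (hmin _ hVB hle) => [h0|hUl].
  left; move/eqP: h0; rewrite -submx0 genmxE submx0 => /eqP h0.
  by rewrite -[V]mulmx1 -sub_BP mulmxA h0 mul0mx.
right; rewrite /row_full /=; apply/eqP/anti_leq.
rewrite rank_leq_col /=.
have := mxrankS hUl; rewrite genmxE mxrankMfree //; last exact: row_base_free.
Qed.

Lemma simple_submod_rank1 : basic_alg A -> \rank U = 1%N.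
Proof. by move=> hb; exact: (hb _ sub_simple). Qed.

End Sub.

Section Quot.
Variables (K : fieldType) (A : falgType K).
Variable (M : cmod (1 : A)).
Local Notation n := (cdim M).
Local Notation ca := (cact M).

Lemma submod_rows (X : 'M[K]_n) (Y : 'M[K]_n) :
  (forall u : 'rV_n, (u <= X)%MS -> (u *m Y <= X)%MS) -> (X *m Y <= X)%MS.
Proof. by move=> h; apply/row_subP => i; rewrite row_mul; apply: h; apply: row_sub. Qed.

Lemma exists_simple (U : 'M[K]_n) : submod U -> U != 0 ->
  exists V, simple_submod V /\ (V <= U)%MS.
Proof.
move: {2}(\rank U) (leqnn (\rank U)) => r; elim: r U => [|r IH] U hr hU hnz.
  by move: hr; rewrite leqn0 mxrank_eq0 (negbTE hnz).
case: (classic (simple_submod U)) => [hs|hns]; first by exists U; split.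
have : exists V, submod V /\ (V <= U)%MS /\ V != 0 /\ ~~ (U <= V)%MS.
  apply: NNPP => hne; apply: hns; split => //; split => // V hV hVU.
  case: (eqVneq V 0) => [->|hV0]; first by left.
  right; apply: NNPP => hUV; apply: hne; exists V; split => //; split => //; split => //.
  by apply/negP.
move=> [V [hV [hVU [hV0 hUV]]]].
have [W [hW hWV]] : exists W, simple_submod W /\ (W <= V)%MS.
  apply: IH => //; have := mxrank_leqif_sup hVU; rewrite (negbTE hUV) => h.
  by move: (h.1) (h.2) => h1 h2; rewrite -ltnS (leq_trans _ hr) // ltn_neqAle h1 h2.
by exists W; split => //; apply: submx_trans hWV hVU.
Qed.

Variable R : 'M[K]_n.
Hypothesis hR : max_submod R.
Let C := (R^C)%MS.
Let B := row_base C.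
Let P := proj_mx C R *m pinvmx B.

Lemma CR0 : (C :&: R = 0)%MS.
Proof. by rewrite capmxC capmx_compl. Qed.

Lemma qBP : B *m P = 1%:M.
Proof.
rewrite /P mulmxA proj_mx_id ?CR0 //; last by rewrite /B eq_row_base.
exact: mulmxVp (row_base_free C).
Qed.

Lemma qRP (x : 'rV_n) : (x <= R)%MS -> x *m P = 0.
Proof. by move=> h; rewrite /P mulmxA proj_mx_0 ?CR0 // mul0mx. Qed.

Lemma qRPm m (x : 'M_(m, n)) : (x <= R)%MS -> x *m P = 0.
Proof. by move=> h; rewrite /P mulmxA proj_mx_0 ?CR0 // mul0mx. Qed.

Lemma qdec m (x : 'M_(m, n)) : (x - x *m P *m B <= R)%MS.
Proof.
have h1 : (x *m proj_mx C R <= B)%MS by rewrite /B eq_row_base proj_mx_sub.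
rewrite /P mulmxA (mulmxKpV h1); apply: proj_mx_compl_sub.
by apply: submx_full; rewrite addsmxC; apply: addsmx_compl_full.
Qed.

Lemma qmul a b : B *m ca b *m ca a *m P = B *m ca b *m P *m (B *m ca a *m P).
Proof.
apply/eqP; rewrite [in X in _ == X]mulmxA [in X in _ == X]mulmxA -subr_eq0 -mulmxBl -mulmxBl.
apply/eqP; apply: qRPm; apply: submx_trans (proj1 hR a).
by apply: submxMr; apply: qdec.
Qed.

Definition quotcmod := sqmod qBP qmul.

Lemma quot_simple : simple_mod quotcmod.
Proof.
case: hR => hsub [hnf hmax]; split.
  rewrite /= /C mxrank_compl subn_gt0; move: hnf; rewrite /row_full.
  by rewrite ltn_neqAle rank_leq_col andbT.
move=> V hV.
have hW : submod (V *m B + R)%MS.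
  move=> a; rewrite addsmxMr addsmx_sub; apply/andP; split; last first.
    exact: submx_trans (hsub a) (addsmxSr _ _).
  have -> : V *m B *m ca a = V *m sq_act B P a *m B + V *m (B *m ca a - B *m ca a *m P *m B).
    by rewrite /sq_act mulmxBr addrC -!mulmxA subrK.
  apply: addmx_sub_adds; first by apply: submxMr (hV a).
  exact: submx_trans (submxMl _ _) (qdec _).
case: (hmax _ hW (addsmxSr _ _)) => [hle|hfull].
  left; have h1 : (V *m B <= R)%MS by apply: submx_trans hle; apply: addsmxSl.
  by rewrite -[V]mulmx1 -qBP mulmxA qRPm.
right; rewrite -sub1mx.
have : (B <= V *m B + R)%MS by apply: submx_full.
case/sub_addsmxP => u hu.
have : B *m P = u.1 *m V *m B *m P + u.2 *m R *m P.
  by rewrite {1}hu mulmxDl (mulmxA u.1).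
rewrite qBP [X in _ + X]qRPm; last by apply: submxMl.
by rewrite addr0 -(mulmxA (u.1 *m V)) qBP mulmx1 => ->; apply: submxMl.
Qed.

Lemma quot_rank1 : basic_alg A -> (\rank (R^C)%MS = 1)%N.
Proof. by move=> hb; exact: (hb _ quot_simple). Qed.

(* there is a one-dim complement: every vector is c m mod R *)
Lemma top_line (hb : basic_alg A) (m x : 'rV_n) : ~~ (m <= R)%MS ->
  exists c : K, (x - c *: m <= R)%MS.
Proof.
move=> hm.
have gen : forall k (B' : 'M_(k, n)) (P' : 'M_(n, k)), k = 1%N ->
   (forall y : 'rV_n, (y - y *m P' *m B' <= R)%MS) -> exists c : K, (x - c *: m <= R)%MS.
  move=> k B' P' hk hd; subst k.
  have hs : forall y : 'rV_n, y *m P' *m B' = (y *m P') 0 0 *: B'.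
    by move=> y; rewrite {1}[y *m P']mx11_scalar mul_scalar_mx.
  have hm' := hd m; have hx := hd x; rewrite hs in hm'; rewrite hs in hx.
  set cm := (m *m P') 0 0 in hm'; set cx := (x *m P') 0 0 in hx.
  have cm0 : cm != 0.
    apply/eqP => h0; move: hm'; rewrite h0 scale0r subr0 => h; by rewrite h in hm.
  exists (cx / cm).
  have -> : x - (cx / cm) *: m = (x - cx *: B') - (cx / cm) *: (m - cm *: B').
    by rewrite scalerBr scalerA divfK // opprB addrA subrK.
  by rewrite addmx_sub // eqmx_opp scalemx_sub.
exact: (gen _ B P (quot_rank1 hb) (fun y => qdec y)).
Qed.

End Quot.

Section Chars.
Variables (K : fieldType) (A : falgType K).
Variables (e f : A).
Hypothesis he : e * e = e.
Hypothesis hfp : primitive_idempotent f.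
Hypothesis hef : e * f = f.
Hypothesis hfe : f * e = f.

Definition is_char (psi : A -> K) :=
  [/\ forall k a b, psi (k *: (e * a * e) + e * b * e) = k * psi (e * a * e) + psi (e * b * e),
      forall a b, psi ((e * a * e) * (e * b * e)) = psi (e * a * e) * psi (e * b * e) &
      psi f = 1].

Definition inC (x : A) := e * x * e = x.

Lemma inC_f : inC f. Proof. by rewrite /inC hef hfe. Qed.

Section OneChar.
Variable psi : A -> K.
Hypothesis hpsi : is_char psi.

Lemma chD k x y : inC x -> inC y -> psi (k *: x + y) = k * psi x + psi y.
Proof. by move=> hx hy; case: hpsi => hl _ _; have := hl k x y; rewrite hx hy. Qed.

Lemma chM x y : inC x -> inC y -> psi (x * y) = psi x * psi y.
Proof. by move=> hx hy; case: hpsi => _ hm _; have := hm x y; rewrite hx hy. Qed.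

Lemma ch0 : psi 0 = 0.
Proof.
have h0 : inC 0 by rewrite /inC mulr0 mul0r.
have := chD 1 h0 h0; rewrite scale1r addr0 mul1r => h.
by apply: (addrI (psi 0)); rewrite -h addr0.
Qed.
End OneChar.

Lemma fxf_inC x : f * x = x -> x * f = x -> inC x.
Proof. by move=> h1 h2; rewrite /inC -{1}h1 mulrA hef h1 -{1}h2 -mulrA hfe h2. Qed.

Section Elt.
Variable x : A.
Hypothesis hfx : f * x = x.
Hypothesis hxf : x * f = x.

Definition hx (q : {poly K}) := horner_alg x q * f.

Lemma hf_comm (q : {poly K}) : f * horner_alg x q = horner_alg x q * f.
Proof.
elim/poly_ind: q => [|q c IH]; first by rewrite rmorph0 mulr0 mul0r.
rewrite rmorphD rmorphM /= horner_algX horner_algC mulrDr mulrDl.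
rewrite mulrA IH -(mulrA (horner_alg x q) f x) hfx -(mulrA _ x f) hxf.
by rewrite -scalerAl -scalerAr mul1r mulr1.
Qed.

Lemma hx_f q : f * hx q = hx q.
Proof. by rewrite /hx mulrA hf_comm -mulrA; case: hfp => -> _ _. Qed.
Lemma hx_f2 q : hx q * f = hx q.
Proof. by rewrite /hx -mulrA; case: hfp => -> _ _. Qed.
Lemma hx_inC q : inC (hx q).
Proof. by apply: fxf_inC; [apply: hx_f | apply: hx_f2]. Qed.

Lemma hxM p q : hx (p * q) = hx p * hx q.
Proof.
rewrite /hx rmorphM /= mulrA -(mulrA (horner_alg x p) f) hf_comm mulrA -(mulrA _ f f).
by case: hfp => -> _ _.
Qed.

Lemma hx1 : hx 1 = f.
Proof. by rewrite /hx rmorph1 mul1r. Qed.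

Lemma hxB p q : hx (p - q) = hx p - hx q.
Proof. by rewrite /hx rmorphB /= mulrBl. Qed.

Lemma hx_eval psi (hpsi : is_char psi) q : psi (hx q) = q.[psi x].
Proof.
have hxC : inC x by apply: fxf_inC.
elim/poly_ind: q => [|q c IH].
  by rewrite /hx rmorph0 mul0r horner0 (ch0 hpsi).
have -> : hx (q * 'X + c%:P) = c *: f + hx q * x.
  rewrite /hx rmorphD rmorphM /= horner_algX horner_algC mulrDl addrC.
  by rewrite -in_algE -scalerAl mul1r -!mulrA hfx hxf.
rewrite (chD hpsi _ inC_f); last by apply: fxf_inC; [rewrite mulrA hx_f | rewrite -mulrA hxf].
rewrite (chM hpsi (hx_inC q) hxC) IH hornerMXaddC.
by case: hpsi => _ _ ->; rewrite mulr1 addrC.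
Qed.

Lemma hx_ann : exists2 p : {poly K}, p != 0 & hx p = 0.
Proof.
pose N := dim A.
pose Wm : 'M[K]_(N.+1, N) := \matrix_(i < N.+1) v2r (x ^+ i * f).
have hnf : ~~ row_free Wm.
  by rewrite /row_free; apply/negP => /eqP h; have := rank_leq_col Wm; rewrite h ltnn.
pose c := nz_row (kermx Wm).
have c0 : c != 0 by rewrite nz_row_eq0 kermx_eq0.
have cW : c *m Wm = 0 by apply/sub_kermxP; apply: nz_row_sub.
pose p := \poly_(i < N.+1) c 0 (inord i).
exists p.
  apply: contraNneq c0 => hp; apply/eqP/rowP => i.
  by rewrite mxE; have := congr1 (fun q : {poly K} => q`_i) hp; rewrite coef_poly ltn_ord coef0 inord_val.
rewrite /hx /p poly_def rmorph_sum /= mulr_suml.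
apply: v2r_inj; rewrite linear0 linear_sum /=.
apply: etrans cW; rewrite mulmx_sum_row; apply: eq_bigr => i _.
by rewrite inord_val -mul_polyC rmorphM /= horner_algC rmorphXn /= horner_algX -mulrA mulr_algl linearZ /= rowK.
Qed.

End Elt.

Lemma char_unique psi1 psi2 : is_char psi1 -> is_char psi2 ->
  forall a, psi1 (e * a * e) = psi2 (e * a * e).
Proof.
move=> h1 h2 a.
have hff : f * f = f by case: hfp.
pose x := f * a * f.
have hfx : f * x = x by rewrite /x !mulrA hff.
have hxf : x * f = x by rewrite /x -mulrA hff.
have red : forall psi, is_char psi -> psi (e * a * e) = psi x.
  move=> psi hp.
  have hea : inC (e * a * e) by rewrite /inC !mulrA he -!mulrA he.
  have hfa : inC (f * (e * a * e)) by rewrite /inC !mulrA hef hfe -(mulrA _ e e) he.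
  have -> : x = f * (e * a * e) * f by rewrite /x !mulrA hfe -!mulrA hef.
  rewrite (chM hp hfa inC_f) (chM hp inC_f hea).
  by case: hp => _ _ ->; rewrite mul1r mulr1.
rewrite (red _ h1) (red _ h2).
apply: NNPP => hne.
have [p p0 hp] := hx_ann x.
set c1 := psi1 x; set c2 := psi2 x.
have r1 : p.[c1] = 0 by rewrite -(hx_eval hfx hxf h1) hp (ch0 h1).
have r2 : p.[c2] = 0 by rewrite -(hx_eval hfx hxf h2) hp (ch0 h2).
have [k [r hr hpr]] := multiplicity_XsubC p c1.
rewrite p0 /= in hr.
have k0 : (0 < k)%N.
  case: k hpr => // hpr; move: hr r1; rewrite hpr expr0 mulr1 /root => /negP hr' r1'.
  by exfalso; apply: hr'; apply/eqP.
have rc2 : r.[c2] = 0.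
  move: r2; rewrite hpr hornerM horner_exp hornerXsubC => /eqP.
  have hne' : (c2 == c1) = false by apply/eqP => h; apply: hne; rewrite -/c1 -/c2 h.
  by rewrite mulf_eq0 expf_eq0 subr_eq0 hne' andbF orbF => /eqP.
have cop : coprimep r (('X - c1%:P) ^+ k).
  by apply: coprimep_expr; rewrite coprimep_XsubC.
have [[u1 u2] /= hb] := Bezout_eq1_coprimepP _ _ cop.
pose q := u2 * ('X - c1%:P) ^+ k.
pose g := hx x q.
have hg1 : psi1 g = 0.
  by rewrite (hx_eval hfx hxf h1) hornerM horner_exp hornerXsubC subrr expr0n (gtn_eqF k0) mulr0.
have hg2 : psi2 g = 1.
  rewrite (hx_eval hfx hxf h2).
  have : (u1 * r + u2 * ('X - c1%:P) ^+ k).[c2] = 1 by rewrite hb hornerC.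
  by rewrite hornerD !hornerM rc2 mulr0 add0r.
have hfg : f - g = hx x (u1 * r).
  by rewrite -(hx1 x) -hxB -hb addrK.
have hgg : g * (f - g) = 0.
  rewrite hfg /g -(hxM hfx hxf).
  have -> : q * (u1 * r) = (u1 * u2) * p.
    by rewrite /q hpr; ring.
  by rewrite (hxM hfx hxf) hp mulr0.
have hgf : g * f = g by apply: hx_f2.
have hfg' : f * g = g by apply: (hx_f hfx hxf).
have hggg : g * g = g by move/eqP: hgg; rewrite mulrBr hgf subr_eq0 => /eqP <-.
case: hfp => hff' hf0 hprim.
have := hprim g (f - g).
rewrite /is_idem hggg => /(_ erefl).
have i2 : (f - g) * (f - g) = f - g.
  by rewrite mulrBr !mulrBl hff hgf hfg' hggg subrr subr0.
move=> /(_ i2 hgg).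
have : (f - g) * g = 0 by rewrite mulrBl hfg' hggg subrr.
move=> o /(_ o); rewrite addrC subrK => /(_ erefl) [g0|fg0].
  by move: hg2; rewrite g0 (ch0 h2) => /eqP; rewrite eq_sym oner_eq0.
have : psi1 (f - g) = 1.
  have hgC : inC g by apply: (hx_inC hfx hxf).
  rewrite addrC -scaleN1r (chD h1 _ hgC inC_f) hg1 mulr0 add0r.
  by case: h1.
by rewrite fg0 (ch0 h1) => /eqP; rewrite eq_sym oner_eq0.
Qed.

End Chars.

Section LinMx.
Variables (K : fieldType) (A : falgType K).
Local Notation N := (dim A).

Definition bas (i : 'I_N) : A := r2v (delta_mx 0 i).

Lemma decompA (a : A) : a = \sum_i (v2r a) 0 i *: bas i.
Proof.
apply: v2r_inj; rewrite linear_sum /= {1}[v2r a]row_sum_delta.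
by apply: eq_bigr => i _; rewrite linearZ /= r2vK.
Qed.

Definition islin p q (F : A -> 'M[K]_(p, q)) :=
  forall k y z, F (k *: y + z) = k *: F y + F z.

Lemma islin_sum p q (F : A -> 'M[K]_(p, q)) : islin F ->
  forall a, F a = \sum_i (v2r a) 0 i *: F (bas i).
Proof.
move=> hF a.
have F0 : F 0 = 0.
  have := hF 1 0 0; rewrite !scale1r addr0 => h.
  by apply: (addrI (F 0)); rewrite -h addr0.
rewrite {1}(decompA a).
apply: (big_rec2 (fun x y => F x = y)) => [//|i x y _ hxy].
by rewrite hF hxy.
Qed.

Lemma islin_ext p q (F G : A -> 'M[K]_(p, q)) : islin F -> islin G ->
  (forall i, F (bas i) = G (bas i)) -> forall a, F a = G a.
Proof.
by move=> hF hG h a; rewrite (islin_sum hF) (islin_sum hG); apply: eq_bigr => i _; rewrite h.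
Qed.

Definition lmx p (g : A -> 'rV[K]_p) : 'M[K]_(N, p) := \matrix_i g (bas i).

Lemma lmxE p (g : A -> 'rV[K]_p) : islin g -> forall y, v2r y *m lmx g = g y.
Proof.
move=> hg y; rewrite (islin_sum hg y) mulmx_sum_row.
by apply: eq_bigr => i _; rewrite rowK.
Qed.

Lemma mx_extA p (X Y : 'M[K]_(N, p)) : (forall y : A, v2r y *m X = v2r y *m Y) -> X = Y.
Proof.
move=> h; apply/row_matrixP => i; rewrite !rowE.
by have := h (bas i); rewrite /bas r2vK.
Qed.

Lemma mx_extV m p q (X Y : 'M[K]_(m * p, q)) :
  (forall Phi : 'M[K]_(m, p), mxvec Phi *m X = mxvec Phi *m Y) -> X = Y.
Proof.
move=> h; apply/row_matrixP => i; rewrite !rowE.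
by have := h (vec_mx (delta_mx 0 i)); rewrite vec_mxK.
Qed.

Definition Lm (c : A) := lmx (fun y => v2r (c * y)).
Definition Rm (c : A) := lmx (fun y => v2r (y * c)).

Lemma LmE c y : v2r y *m Lm c = v2r (c * y).
Proof. by apply: lmxE => k a b /=; rewrite mulrDr -scalerAr !linearP. Qed.
Lemma RmE c y : v2r y *m Rm c = v2r (y * c).
Proof. by apply: lmxE => k a b /=; rewrite mulrDl -scalerAl !linearP. Qed.

Lemma RmM a b : Rm (a * b) = Rm a *m Rm b.
Proof. by apply: mx_extA => y; rewrite mulmxA !RmE mulrA. Qed.
Lemma Rm1 : Rm 1 = 1%:M.
Proof. by apply: mx_extA => y; rewrite RmE mulr1 mulmx1. Qed.
Lemma LmRm a b : Lm a *m Rm b = Rm b *m Lm a.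
Proof. by apply: mx_extA => y; rewrite !mulmxA LmE RmE RmE LmE mulrA. Qed.
Lemma Lm_lin : islin Lm.
Proof.
move=> k a b; apply: mx_extA => y.
by rewrite mulmxDr -scalemxAr !LmE mulrDl -scalerAl linearP.
Qed.
Lemma Rm_lin : islin Rm.
Proof.
move=> k a b; apply: mx_extA => y.
by rewrite mulmxDr -scalemxAr !RmE mulrDr -scalerAr linearP.
Qed.

End LinMx.

Section Coind.
Variables (K : fieldType) (A : falgType K).
Local Notation N := (dim A).
Variables (e : A) (L : cmod e).
Hypothesis he : e * e = e.
Local Notation dL := (cdim L).

Definition hact (b : A) : 'M[K]_(N * dL) := lin_mulmx (Rm b).

Lemma hactE (Phi : 'M[K]_(N, dL)) b : mxvec Phi *m hact b = mxvec (Rm b *m Phi).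
Proof. by rewrite /hact /lin_mulmx mul_vec_lin. Qed.

Lemma hactE' (u : 'rV[K]_(N * dL)) b : vec_mx (u *m hact b) = Rm b *m vec_mx u.
Proof. by rewrite -{1}[u]vec_mxK hactE mxvecK. Qed.

Fact h_corner a : hact a = hact (1 * a * 1).
Proof. by rewrite mul1r mulr1. Qed.
Fact h_lin (k : K) (a b : A) :
  hact (k *: (1 * a * 1) + 1 * b * 1) = k *: hact (1 * a * 1) + hact (1 * b * 1).
Proof.
rewrite !mul1r !mulr1; apply: mx_extV => Phi.
by rewrite mulmxDr -scalemxAr !hactE Rm_lin mulmxDl -scalemxAl linearP.
Qed.
Fact h_unit : hact 1 = 1%:M.
Proof. by apply: mx_extV => Phi; rewrite hactE Rm1 mul1mx mulmx1. Qed.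
Fact h_mul (a b : A) : hact ((1 * a * 1) * (1 * b * 1)) = hact (1 * b * 1) *m hact (1 * a * 1).
Proof.
rewrite !mul1r !mulr1; apply: mx_extV => Phi.
by rewrite mulmxA !hactE RmM mulmxA.
Qed.

Definition Hmod : cmod (1 : A) := @CMod K A 1 (N * dL) hact h_corner h_lin h_unit h_mul.

Definition Cond (Phi : 'M[K]_(N, dL)) (a : A) := Lm (e * a * e) *m Phi = Phi *m cact L a.

Lemma cactL_lin : islin (cact L).
Proof.
move=> k y z; rewrite (cact_corner L) (cact_corner L y) (cact_corner L z) -(cact_lin L).
by congr (cact L _); rewrite mulrDr mulrDl -scalerAr -scalerAl.
Qed.

Lemma Cond_all Phi : (forall i, Cond Phi (bas i)) -> forall a, Cond Phi a.
Proof.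
move=> h a.
apply: (@islin_ext _ _ _ _ (fun a => Lm (e * a * e) *m Phi) (fun a => Phi *m cact L a)) => //.
- move=> k y z /=.
  have -> : e * (k *: y + z) * e = k *: (e * y * e) + e * z * e.
    by rewrite mulrDr mulrDl -scalerAr -scalerAl.
  by rewrite Lm_lin mulmxDl -scalemxAl.
- by move=> k y z /=; rewrite cactL_lin mulmxDr -scalemxAr.
Qed.

Definition Cmx : 'M[K]_(N * dL) :=
  (\bigcap_(i < N) kermx (lin_mulmx (Lm (e * bas i * e)%R) - lin_mulmxr (cact L (bas i)))%R)%MS.

Lemma CmxP (Phi : 'M[K]_(N, dL)) : (mxvec Phi <= Cmx)%MS <-> forall a, Cond Phi a.
Proof.
split.
  move=> /sub_bigcapmxP h; apply: Cond_all => i; have := h i isT.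
  rewrite sub_kermx mulmxBr /lin_mulmx /lin_mulmxr !mul_vec_lin /= /mulmxr subr_eq0.
  by move/eqP/(can_inj mxvecK).
move=> h; apply/sub_bigcapmxP => i _.
by rewrite sub_kermx mulmxBr /lin_mulmx /lin_mulmxr !mul_vec_lin /= /mulmxr h subrr.
Qed.

Lemma corner_mul (a y : A) : e * (e * a * e * y) * e = (e * a * e) * (e * y * e).
Proof. by rewrite !mulrA he -(mulrA (e * a) e e) he. Qed.

Lemma Cmx_submod : submod (M := Hmod) Cmx.
Proof.
move=> b; apply: submod_rows => u hu /=.
rewrite -[u *m _]vec_mxK; apply/CmxP => a.
rewrite hactE' /Cond mulmxA LmRm -mulmxA.
by move/CmxP: (eq_ind_r (fun v => (v <= Cmx)%MS) hu (vec_mxK u)) => ->; rewrite mulmxA.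
Qed.

Hypothesis hL : simple_mod L.
Hypothesis hb : basic_alg A.

Lemma L_dim1 : dL = 1%N.
Proof.
have dL0 : (0 < dL)%N by case: hL.
pose l0 : 'rV[K]_dL := nz_row (1%:M : 'M[K]_dL).
have l00 : l0 != 0.
  by rewrite nz_row_eq0 -mxrank_eq0 mxrank1 -lt0n.
pose g := fun y : A => l0 *m cact L y.
have glin : islin g by move=> k y z; rewrite /g cactL_lin mulmxDr -scalemxAr.
pose Phi1 := lmx g.
have hPhi1 : forall a, Cond Phi1 a.
  move=> a; apply: mx_extA => y.
  rewrite mulmxA LmE (lmxE glin) [RHS]mulmxA (lmxE glin) /g -mulmxA.
  congr (l0 *m _).
  by rewrite (cact_corner L) corner_mul (cact_mul L) -!(cact_corner L).
have Phi10 : Phi1 != 0.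
  apply: contraNneq l00 => h0.
  by have := lmxE glin e; rewrite -/Phi1 h0 mulmx0 /g (cact_unit L) mulmx1 => <-.
have Cnz : Cmx != 0.
  apply: contraNneq Phi10 => h0.
  have := proj2 (CmxP Phi1) hPhi1; rewrite h0 submx0 mxvec_eq0 => /eqP //.
have [V [hV hVC]] := exists_simple Cmx_submod Cnz.
have rV1 : \rank V = 1%N := simple_submod_rank1 hV hb.
pose u0 := nz_row V.
have hV0 : V != 0 by case: hV => _ [].
have u00 : u0 != 0 by rewrite nz_row_eq0.
have Vu0 : (V <= u0)%MS.
  have := mxrank_leqif_sup (nz_row_sub V); rewrite rV1 rank_rV u00 => h.
  by rewrite -(h.2).
pose Phi0 := vec_mx u0.
have Phi00 : Phi0 != 0 by rewrite vec_mx_eq0.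
have eig : forall b, exists c : K, Rm b *m Phi0 = c *: Phi0.
  move=> b.
  have : (u0 *m hact b <= u0)%MS.
    apply: submx_trans Vu0; apply: submx_trans (proj1 hV b).
    by apply: submxMr; apply: nz_row_sub.
  case/sub_rVP => c hc; exists c.
  by rewrite /Phi0 -hactE' hc linearZ.
have cond0 : forall a, Cond Phi0 a.
  apply/CmxP; rewrite /Phi0 vec_mxK.
  by apply: submx_trans hVC; apply: nz_row_sub.
have rk : (\rank Phi0 <= 1)%N.
  apply: leq_trans (rank_leq_row (v2r (1 : A) *m Phi0)).
  apply: mxrankS; apply/row_subP => i.
  rewrite rowE.
  have -> : delta_mx 0 i = v2r (1 * bas i) by rewrite mul1r /bas r2vK.
  rewrite -RmE -mulmxA; have [c ->] := eig (bas i).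
  by rewrite -scalemxAr scalemx_sub.
have hsub : submod <<Phi0>>%MS.
  move=> a; rewrite (eqmxMr _ (genmxE _)) genmxE -cond0.
  exact: submxMl.
case: hL => _ /(_ _ hsub) [h0|hf].
  move: Phi00; rewrite -mxrank_eq0 -mxrank_gen h0 mxrank0 eqxx //.
move: hf; rewrite /row_full mxrank_gen => /eqP hr.
by apply/eqP; rewrite eqn_leq -{1}hr rk dL0.
Qed.

End Coind.

Section Iso.
Variables (K : fieldType) (A : falgType K).
Variables (M N : cmod (1 : A)) (m : 'rV[K]_(cdim M)) (n : 'rV[K]_(cdim N)).
Hypothesis cycM : forall v, exists x, v = m *m cact M x.
Hypothesis cycN : forall v, exists x, v = n *m cact N x.
Hypothesis ann : forall x, m *m cact M x = 0 <-> n *m cact N x = 0.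

Let gM := fun x => m *m cact M x.
Let gN := fun x => n *m cact N x.
Lemma gM_lin : islin gM.
Proof. by move=> k y z; rewrite /gM cactDZ mulmxDr -scalemxAr. Qed.
Lemma gN_lin : islin gN.
Proof. by move=> k y z; rewrite /gN cactDZ mulmxDr -scalemxAr. Qed.
Let EM := lmx gM.
Let EN := lmx gN.

Lemma rv_ext p q (X Y : 'M[K]_(p, q)) : (forall v : 'rV_p, v *m X = v *m Y) -> X = Y.
Proof. by move=> h; apply/row_matrixP => i; rewrite !rowE h. Qed.


Lemma EMP : EM *m (pinvmx EM *m EN) = EN.
Proof.
apply: mx_extA => y; rewrite mulmxA mulmxA (mulmxA (v2r y)).
set t := v2r y *m EM *m pinvmx EM.
have ht : t *m EM = v2r y *m EM by rewrite /t mulmxKpV // submxMl.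
have : (t - v2r y) *m EM = 0 by rewrite mulmxBl ht subrr.
rewrite -[t - v2r y]r2vK (lmxE gM_lin) => /ann.
by rewrite -/(gN _) -(lmxE gN_lin) r2vK mulmxBl /EN => /eqP; rewrite subr_eq0 => /eqP.
Qed.

Lemma ENQ : EN *m (pinvmx EN *m EM) = EM.
Proof.
apply: mx_extA => y; rewrite mulmxA mulmxA (mulmxA (v2r y)).
set t := v2r y *m EN *m pinvmx EN.
have ht : t *m EN = v2r y *m EN by rewrite /t mulmxKpV // submxMl.
have : (t - v2r y) *m EN = 0 by rewrite mulmxBl ht subrr.
rewrite -[t - v2r y]r2vK /EN (lmxE gN_lin) => /ann.
by rewrite -/(gM _) -(lmxE gM_lin) r2vK mulmxBl /EM => /eqP; rewrite subr_eq0 => /eqP.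
Qed.

Lemma EM_full : row_full EM.
Proof.
rewrite -sub1mx; apply/row_subP => i; have [x ->] := cycM (row i 1%:M).
by rewrite -/(gM x) -(lmxE gM_lin) /EM submxMl.
Qed.
Lemma EN_full : row_full EN.
Proof.
rewrite -sub1mx; apply/row_subP => i; have [x ->] := cycN (row i 1%:M).
by rewrite -/(gN x) -(lmxE gN_lin) /EN submxMl.
Qed.

Lemma iso_of_ann : mod_iso M N.
Proof.
pose P := pinvmx EM *m EN; pose Q := pinvmx EN *m EM.
have PQ : P *m Q = 1%:M.
  have h : EM *m (P *m Q) = EM by rewrite mulmxA /P EMP /Q ENQ.
  have := congr1 (mulmx (pinvmx EM)) h.
  by rewrite (mulmxA (pinvmx EM) EM) (mulVpmx EM_full) mul1mx => ->.
have QP : Q *m P = 1%:M.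
  have h : EN *m (Q *m P) = EN by rewrite mulmxA /Q ENQ /P EMP.
  have := congr1 (mulmx (pinvmx EN)) h.
  by rewrite (mulmxA (pinvmx EN) EN) (mulVpmx EN_full) mul1mx => ->.
exists P; split.
- rewrite /row_free eqn_leq rank_leq_row /=.
  by have := mxrankM_maxl P Q; rewrite PQ mxrank1.
- rewrite /row_full eqn_leq rank_leq_col /=.
  by have := mxrankM_maxr Q P; rewrite QP mxrank1.
- move=> a; apply: rv_ext => v.
  have [x ->] := cycM v.
  have e1 : m *m cact M x *m cact M a = v2r (a * x) *m EM.
    by rewrite -mulmxA -cactM /EM (lmxE gM_lin).
  have e2 : m *m cact M x = v2r x *m EM by rewrite /EM (lmxE gM_lin).
  have f1 : n *m cact N x *m cact N a = v2r (a * x) *m EN.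
    by rewrite -mulmxA -cactM /EN (lmxE gN_lin).
  have f2 : n *m cact N x = v2r x *m EN by rewrite /EN (lmxE gN_lin).
  rewrite (mulmxA (m *m cact M x)) e1 (mulmxA (m *m cact M x)) e2.
  by rewrite -(mulmxA (v2r (a * x))) /P EMP -(mulmxA (v2r x)) EMP -f1 -f2.
Qed.

End Iso.

Section Span.
Variables (K : fieldType) (A : falgType K) (M : cmod (1 : A)).
Local Notation n := (cdim M).
Local Notation ca := (cact M).

Definition Spn (v0 : 'rV[K]_n) := lmx (fun x => v0 *m ca x).

Lemma Spn_lin (v0 : 'rV[K]_n) : islin (fun x => v0 *m ca x).
Proof. by move=> k y z; rewrite cactDZ mulmxDr -scalemxAr. Qed.

Lemma SpnP (v0 : 'rV[K]_n) (u : 'rV_n) : (u <= Spn v0)%MS <-> exists x, u = v0 *m ca x.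
Proof.
split.
  by case/submxP => w ->; exists (r2v w); rewrite -(lmxE (Spn_lin v0)) r2vK.
by case=> x ->; rewrite -(lmxE (Spn_lin v0)) submxMl.
Qed.

Lemma Spn_self (v0 : 'rV[K]_n) : (v0 <= Spn v0)%MS.
Proof. by apply: (proj2 (SpnP _ _)); exists 1; rewrite cact1 mulmx1. Qed.

Lemma Spn_submod (v0 : 'rV[K]_n) : submod <<Spn v0>>%MS.
Proof.
move=> a; apply: submod_rows => u; rewrite genmxE => /SpnP [x ->].
by rewrite genmxE; apply/SpnP; exists (a * x); rewrite cactM mulmxA.
Qed.

Lemma scal_uniq (c d : K) (v : 'rV[K]_n) : v != 0 -> c *: v = d *: v -> c = d.
Proof.
move=> v0 /eqP; rewrite -subr_eq0 -scalerBl scaler_eq0 (negbTE v0) orbF subr_eq0.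
by move/eqP.
Qed.

Lemma exists_max (W : 'M[K]_n) : submod W -> ~~ row_full W ->
  exists U, max_submod U /\ (W <= U)%MS.
Proof.
move: {2}(n - \rank W)%N (leqnn (n - \rank W)) => r; elim: r W => [|r IH] W hr hW hnf.
  move: hr hnf; rewrite leqn0 subn_eq0 /row_full => h; rewrite eqn_leq h rank_leq_col //.
case: (classic (max_submod W)) => [hm|hnm]; first by exists W; split.
have : exists V, submod V /\ (W <= V)%MS /\ ~~ (V <= W)%MS /\ ~~ row_full V.
  apply: NNPP => hne; apply: hnm; split => //; split => // V hV hWV.
  case: (boolP (V <= W)%MS) => [h|h]; first by left.
  right; apply: NNPP => hf; apply: hne; exists V; split => //; split => //; split => //.
  by apply/negP.
move=> [V [hV [hWV [hVW hVf]]]].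
have [U [hU hVU]] : exists U, max_submod U /\ (V <= U)%MS.
  apply: IH => //.
  have h := mxrank_leqif_sup hWV; rewrite (negbTE hVW) in h.
  have lt : (\rank W < \rank V)%N by rewrite ltn_neqAle h.1 h.2.
  have := rank_leq_col V; move: hr lt; clear; lia.
by exists U; split => //; apply: submx_trans hVU.
Qed.

End Span.

Section Extract.
Variables (K : fieldType) (A : falgType K) (e f : A) (M : cmod (1 : A)).
Hypothesis he : e * e = e.
Hypothesis hfp : primitive_idempotent f.
Hypothesis hef : e * f = f.
Hypothesis hfe : f * e = f.
Hypothesis hb : basic_alg A.
Hypothesis hMs : ~ simple_mod M.
Variable chi : A -> K.
Hypothesis hchi : is_char e f chi.
Local Notation n := (cdim M).
Local Notation ca := (cact M).
Variables (R S : 'M[K]_n).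
Hypothesis hR : is_rad R.
Hypothesis hS : is_soc S.
Hypothesis hRm : max_submod R.
Hypothesis hRf : ~~ (ca f <= R)%MS.
Hypothesis hSs : simple_submod S.
Hypothesis hSf : S *m ca f != 0.
Hypothesis hRS : (R *m ca e <= S)%MS.

Lemma hff : f * f = f. Proof. by case: hfp. Qed.

Definition s := nz_row S.
Lemma s0 : s != 0. Proof. by rewrite nz_row_eq0; case: hSs => _ []. Qed.
Lemma sS : (s <= S)%MS. Proof. exact: nz_row_sub. Qed.
Lemma Ss : (S <= s)%MS.
Proof.
have := mxrank_leqif_sup sS; rewrite (simple_submod_rank1 hSs hb) rank_rV s0 => h.
by rewrite -(h.2).
Qed.

Lemma phi_ex a : exists c : K, s *m ca a == c *: s.
Proof.
have : (s *m ca a <= s)%MS.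
  apply: submx_trans Ss; apply: submx_trans (proj1 hSs a); exact: submxMr sS.
by case/sub_rVP => c ->; exists c.
Qed.
Definition phi a := xchoose (phi_ex a).
Lemma phiE a : s *m ca a = phi a *: s.
Proof. exact/eqP/(xchooseP (phi_ex a)). Qed.

Lemma phiM a b : phi (a * b) = phi a * phi b.
Proof.
apply: (scal_uniq s0); rewrite -phiE cactM mulmxA phiE -scalemxAl phiE scalerA.
by rewrite mulrC.
Qed.
Lemma phiD k a b : phi (k *: a + b) = k * phi a + phi b.
Proof.
apply: (scal_uniq s0); rewrite -phiE cactDZ mulmxDr -scalemxAr !phiE scalerDl scalerA.
by [].
Qed.
Lemma phi_f : phi f = 1.
Proof.
have hf0 : phi f != 0.
  apply: contraNneq hSf => h0.
  have := Ss; case/submxP => X ->.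
  by rewrite -mulmxA phiE h0 scale0r mulmx0.
have := phiM f f; rewrite hff => /eqP.
rewrite -{1}[phi f]mulr1 => /eqP /(mulfI hf0) <-.
by [].
Qed.

Lemma mi_ex : exists i, ~~ (row i (ca f) <= R)%MS.
Proof. by case/row_subPn: hRf => i hi; exists i. Qed.
Definition m := row (xchoose mi_ex) (ca f).
Lemma m_notR : ~~ (m <= R)%MS. Proof. exact: xchooseP mi_ex. Qed.
Lemma m_f : m *m ca f = m.
Proof. by rewrite /m -row_mul -cactM hff. Qed.
Lemma m_e : m *m ca e = m.
Proof. by rewrite -{1}m_f -mulmxA -cactM hef m_f. Qed.

Lemma Rsub : submod R. Proof. by case: hRm. Qed.

Lemma line_uniq (x : 'rV_n) c d : (x - c *: m <= R)%MS -> (x - d *: m <= R)%MS -> c = d.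
Proof.
move=> h1 h2; apply: NNPP => hne.
have : ((d - c) *: m <= R)%MS.
  have -> : (d - c) *: m = (x - c *: m) - (x - d *: m).
    by rewrite scalerBl opprB addrA [RHS]addrAC (addrAC x) subrr add0r addrC.
  by rewrite addmx_sub // eqmx_opp.
move/(scalemx_sub (d - c)^-1); rewrite scalerA mulVf ?scale1r; last first.
  by rewrite subr_eq0; apply/eqP => h; apply: hne.
by move=> h; move: m_notR; rewrite h.
Qed.

Lemma psi_ex a : exists c : K, (m *m ca a - c *: m <= R)%MS.
Proof. by apply: (top_line hRm hb); exact: m_notR. Qed.
Definition psi a := xchoose (psi_ex a).
Lemma psiE a : (m *m ca a - psi a *: m <= R)%MS.
Proof. exact: xchooseP (psi_ex a). Qed.

Lemma psiM a b : psi (a * b) = psi a * psi b.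
Proof.
apply: (line_uniq (psiE (a * b))).
have -> : m *m ca (a * b) - (psi a * psi b) *: m =
   (m *m ca b - psi b *: m) *m ca a + psi b *: (m *m ca a - psi a *: m).
  rewrite cactM mulmxA mulmxBl -scalemxAl scalerBr scalerA [psi b * _]mulrC.
  by rewrite addrA subrK.
rewrite addmx_sub // ?scalemx_sub ?psiE //.
by apply: submx_trans (Rsub a); apply: submxMr; apply: psiE.
Qed.

Lemma psiD k a b : psi (k *: a + b) = k * psi a + psi b.
Proof.
apply: (line_uniq (psiE _)).
have -> : m *m ca (k *: a + b) - (k * psi a + psi b) *: m =
   k *: (m *m ca a - psi a *: m) + (m *m ca b - psi b *: m).
  rewrite cactDZ mulmxDr -scalemxAr scalerDl -scalerA scalerBr.
  by rewrite opprD !addrA; congr (_ + _); rewrite addrAC.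
by rewrite addmx_sub ?scalemx_sub ?psiE.
Qed.

Lemma psi_f : psi f = 1.
Proof.
apply: (line_uniq (psiE f)); rewrite m_f scale1r subrr; exact: sub0mx.
Qed.

Lemma psi_char : is_char e f psi.
Proof. by split; [move=> k a b; apply: psiD | move=> a b; apply: psiM | apply: psi_f]. Qed.
Lemma phi_char : is_char e f phi.
Proof. by split; [move=> k a b; apply: phiD | move=> a b; apply: phiM | apply: phi_f]. Qed.

Lemma psi_chi a : psi (e * a * e) = chi (e * a * e).
Proof. exact: (char_unique he hfp hef hfe psi_char hchi). Qed.
Lemma phi_chi a : phi (e * a * e) = chi (e * a * e).
Proof. exact: (char_unique he hfp hef hfe phi_char hchi). Qed.

Lemma simple_s V : simple_submod V -> (s <= V)%MS.
Proof.
move=> hV.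
have hVS : (V <= S)%MS.
  apply/row_subP => i; apply/(proj2 (hS (row i V))).
  exists 1%N, (fun _ => row i V); split; first by rewrite big_ord1.
  by move=> _; exists V; split => //; apply: row_sub.
have hVs : (V <= s)%MS by apply: submx_trans Ss.
have hV0 : V != 0 by case: hV => _ [].
have := mxrank_leqif_sup hVs; rewrite rank_rV s0 => h.
rewrite -(h.2) eqn_leq h.1 /= lt0n mxrank_eq0 //.
Qed.

Lemma phi_e : phi e = 1.
Proof. by have := phiM e f; rewrite hef phi_f mulr1 => <-. Qed.

Lemma sR : (s <= R)%MS.
Proof.
apply: NNPP => hsR; apply: hMs.
have R0 : R = 0.
  apply/eqP; apply: NNPP => hR0.
  have [V [hV hVR]] := exists_simple Rsub (introT negP hR0) .
  have hVS : (V <= S)%MS.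
    apply/row_subP => i; apply/(proj2 (hS (row i V))).
    exists 1%N, (fun _ => row i V); split; first by rewrite big_ord1.
    by move=> _; exists V; split => //; apply: row_sub.
  have hVs : (V <= s)%MS by apply: submx_trans Ss.
  have hV0 : V != 0 by case: hV => _ [].
  have : (s <= V)%MS.
    have := mxrank_leqif_sup hVs; rewrite rank_rV s0 => h.
    rewrite -(h.2) eqn_leq h.1 /= lt0n mxrank_eq0 //.
  move=> hsV; apply: hsR.
  by apply: submx_trans hsV hVR.
have allm : forall x : 'rV_n, exists c : K, x = c *: m.
  move=> x; have [c hc] := top_line hRm hb x m_notR; exists c.
  by move: hc; rewrite R0 submx0 subr_eq0 => /eqP.
have m0 : m != 0 by apply: contraNneq m_notR => ->; apply: sub0mx.
split.
  by have := rank_leq_col m; rewrite rank_rV m0.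
move=> U hU.
case: (eqVneq U 0) => [->|hU0]; first by left.
right; rewrite -sub1mx.
have [u hu] : exists u : 'rV_n, (u <= U)%MS /\ u != 0.
  by exists (nz_row U); split; [apply: nz_row_sub | rewrite nz_row_eq0].
have [c hc] := allm u.
have c0 : c != 0 by apply: contraNneq hu.2 => h; rewrite hc h scale0r.
have mU : (m <= U)%MS.
  by have := scalemx_sub c^-1 hu.1; rewrite hc scalerA mulVf // scale1r.
apply/row_subP => i; have [d ->] := allm (row i 1%:M).
exact: scalemx_sub.
Qed.

Lemma indep c d : c *: m + d *: s = 0 -> c = 0 /\ d = 0.
Proof.
move=> h.
have hc : c = 0.
  apply: (line_uniq (x := c *: m)); first by rewrite subrr sub0mx.
  rewrite scale0r subr0.
  have -> : c *: m = - (d *: s) by apply/eqP; rewrite -subr_eq0 opprK h.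
  by rewrite eqmx_opp scalemx_sub // sR.
split => //; move: h; rewrite hc scale0r add0r => /eqP.
by rewrite scaler_eq0 (negbTE s0) orbF => /eqP.
Qed.

Lemma coef_eq c1 d1 c2 d2 : c1 *: m + d1 *: s = c2 *: m + d2 *: s -> c1 = c2 /\ d1 = d2.
Proof.
move=> h; have := @indep (c1 - c2) (d1 - d2).
rewrite !scalerBl addrACA -opprD h subrr => /(_ erefl) [/eqP h1 /eqP h2].
by split; apply/eqP; rewrite -subr_eq0.
Qed.

Lemma dl_ex a : exists d : K, m *m ca (e * a * e) - psi (e * a * e) *: m == d *: s.
Proof.
set y := m *m ca (e * a * e) - psi (e * a * e) *: m.
have hy : (y <= R)%MS by apply: psiE.
have ye : y *m ca e = y.
  rewrite /y mulmxBl -scalemxAl m_e -mulmxA -cactM.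
  by rewrite !mulrA he.
have : (y <= s)%MS.
  rewrite -ye; apply: submx_trans Ss; apply: submx_trans hRS; exact: submxMr.
by case/sub_rVP => c ->; exists c.
Qed.
Definition dl a := xchoose (dl_ex a).
Lemma dlE a : m *m ca (e * a * e) - psi (e * a * e) *: m = dl a *: s.
Proof. exact/eqP/(xchooseP (dl_ex a)). Qed.

Lemma dlC z : e * z * e = z -> m *m ca z = chi z *: m + dl z *: s.
Proof.
move=> hz; have := dlE z; rewrite psi_chi hz => <-.
by rewrite addrC subrK.
Qed.

Lemma corner_idem a : e * (e * a * e) * e = e * a * e.
Proof. by rewrite !mulrA he -(mulrA _ e e) he. Qed.

Lemma corner_lin k a b : e * (k *: (e * a * e) + e * b * e) * e = k *: (e * a * e) + e * b * e.
Proof. by rewrite mulrDr mulrDl -scalerAr -scalerAl !corner_idem. Qed.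

Lemma corner_prod a b : e * ((e * a * e) * (e * b * e)) * e = (e * a * e) * (e * b * e).
Proof.
have h : (e * a * e) * (e * b * e) = e * (a * e * b) * e.
  by rewrite !mulrA -(mulrA (e * a) e e) he.
by rewrite h corner_idem.
Qed.

Lemma F1 k a b : dl (k *: (e * a * e) + e * b * e) = k * dl (e * a * e) + dl (e * b * e).
Proof.
have := dlC (corner_lin k a b).
rewrite cactDZ mulmxDr -scalemxAr (dlC (corner_idem a)) (dlC (corner_idem b)).
rewrite scalerDr !scalerA addrACA -!scalerDl => /esym /coef_eq [_ ->].
by [].
Qed.

Lemma F2 a b : dl ((e * a * e) * (e * b * e)) =
   dl (e * b * e) * chi (e * a * e) + chi (e * b * e) * dl (e * a * e).
Proof.
have := dlC (corner_prod a b).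
rewrite cactM mulmxA (dlC (corner_idem b)) mulmxDl -!scalemxAl (dlC (corner_idem a)).
rewrite phiE -(corner_idem a) phi_chi !corner_idem.
rewrite scalerDr !scalerA -addrA -scalerDl => /esym /coef_eq [_ ->].
by rewrite addrC.
Qed.

Lemma cyc : forall v, exists x, v = m *m ca x.
Proof.
have hsub := Spn_submod m.
have full : row_full <<Spn m>>%MS.
  apply: NNPP => /negP hnf.
  have [U [hUm hWU]] := exists_max hsub hnf.
  have hUf := proj1 (proj2 hUm).
  have RU : (R <= U)%MS.
    apply/row_subP => i; apply: (proj1 (hR (row i R))); first exact: row_sub.
    exact: hUm.
  have mU : (m <= U)%MS by apply: submx_trans hWU; rewrite genmxE Spn_self.
  move/negP: hUf; apply; rewrite -sub1mx; apply/row_subP => i.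
  have [c hc] := top_line hRm hb (row i 1%:M) m_notR.
  rewrite -(subrK (c *: m) (row i 1%:M)) addmx_sub ?scalemx_sub //.
  exact: submx_trans hc RU.
move=> v; apply: (proj1 (SpnP m v)).
have : (v <= <<Spn m>>)%MS by apply: submx_full.
by rewrite genmxE.
Qed.

(* nonsplit *)
Lemma F3 : exists a, dl (e * a * e) != 0.
Proof.
apply: NNPP => hall.
have h0 : forall a, dl (e * a * e) = 0.
  by move=> a; apply: NNPP => h; apply: hall; exists a; apply/eqP.
have [x hx] := cyc s.
have : s = m *m ca (e * x * e).
  rewrite -[s]scale1r -phi_e -phiE hx -mulmxA -cactM.
  by rewrite -{1}m_e -mulmxA -cactM.
rewrite (dlC (corner_idem x)) h0 => h.
have hh : 0 *: m + 1 *: s = chi (e * x * e) *: m + 0 *: s.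
  by rewrite {1}scale0r add0r scale1r; exact: h.
have [_ /eqP] := coef_eq hh.
by rewrite oner_eq0.
Qed.

Lemma czf y x : e * (e * y * x * f) * e = e * y * x * f.
Proof. by rewrite !mulrA he -(mulrA _ f e) hfe. Qed.

Lemma mz y x : m *m ca (e * y * x * f) = m *m ca x *m ca y *m ca e.
Proof. by rewrite !cactM !mulmxA m_f. Qed.

Lemma F4 x : m *m ca x = 0 <-> (forall y, chi (e * y * x * f) = 0 -> dl (e * y * x * f) = 0).
Proof.
split.
  move=> h y _; have := mz y x; rewrite h !mul0mx (dlC (czf y x)) => /indep.
  by case.
move=> h; apply: NNPP => hne.
set v := m *m ca x.
have v0 : v != 0 by apply/eqP.
have hA0 : <<Spn v>>%MS != 0.
  apply: contraNneq v0 => h0.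
  have : (v <= <<Spn v>>)%MS by rewrite genmxE Spn_self.
  by rewrite h0 submx0 => /eqP.
have [V [hV hVA]] := exists_simple (Spn_submod v) hA0.
have : (s <= <<Spn v>>)%MS by apply: submx_trans (simple_s hV) hVA.
rewrite genmxE => /(proj1 (SpnP v s)) [y0 hy0].
have hs : s = m *m ca (e * y0 * x * f).
  by rewrite mz -/v -hy0 -[LHS]scale1r -phi_e phiE.
rewrite (dlC (czf y0 x)) in hs.
have hh : 0 *: m + 1 *: s = chi (e * y0 * x * f) *: m + dl (e * y0 * x * f) *: s.
  by rewrite scale0r add0r scale1r; exact: hs.
have [c0 d1] := coef_eq hh.
by move: (h y0 (esym c0)); rewrite -d1 => /eqP; rewrite oner_eq0.
Qed.

Lemma extract_sec : exists (m0 : 'rV[K]_n) (d : A -> K),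
 [/\ forall k a b, d (k *: (e * a * e) + e * b * e) = k * d (e * a * e) + d (e * b * e),
     forall a b, d ((e * a * e) * (e * b * e)) = d (e * b * e) * chi (e * a * e) + chi (e * b * e) * d (e * a * e),
     exists a, d (e * a * e) != 0,
     forall x, m0 *m ca x = 0 <-> (forall y, chi (e * y * x * f) = 0 -> d (e * y * x * f) = 0) &
     forall v, exists x, v = m0 *m ca x].
Proof.
exists m, dl; split; [exact: F1 | exact: F2 | exact: F3 | exact: F4 | exact: cyc].
Qed.

End Extract.

Lemma extract (K : fieldType) (A : falgType K) (e f : A) (M : cmod (1 : A))
  (he : e * e = e) (hfp : primitive_idempotent f) (hef : e * f = f) (hfe : f * e = f)
  (hb : basic_alg A) (hMs : ~ simple_mod M) (chi : A -> K) (hchi : is_char e f chi) :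
  lemma8_cond e f M ->
  exists (m0 : 'rV[K]_(cdim M)) (d : A -> K),
 [/\ forall k a b, d (k *: (e * a * e) + e * b * e) = k * d (e * a * e) + d (e * b * e),
     forall a b, d ((e * a * e) * (e * b * e)) = d (e * b * e) * chi (e * a * e) + chi (e * b * e) * d (e * a * e),
     exists a, d (e * a * e) != 0,
     forall x, m0 *m cact M x = 0 <-> (forall y, chi (e * y * x * f) = 0 -> d (e * y * x * f) = 0) &
     forall v, exists x, v = m0 *m cact M x].
Proof.
case=> R [S [hR hS [hRm hRf] [hSs hSf] hRS]].
by apply: (extract_sec he hfp hef hfe hb hMs hchi hR hS hRm hRf hSs hSf hRS).
Qed.

Lemma mx1_scalar (K : fieldType) n (X : 'M[K]_n) : n = 1%N -> X = (\tr X)%:M.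
Proof. by move=> hn; move: X; rewrite hn => X; rewrite {1}[X]mx11_scalar /mxtrace big_ord1. Qed.

Lemma tr_scalar1 (K : fieldType) n (x : K) : n = 1%N -> \tr (x%:M : 'M[K]_n) = x.
Proof. by move=> hn; rewrite mxtrace_scalar hn. Qed.

Theorem lemma8 (K : closedFieldType) (A : falgType K) (e f e' : A)
  (hbasic : basic_alg A)
  (he : is_idem e) (hf : primitive_idempotent f) (he' : is_idem e')
  (horth1 : f * e' = 0) (horth2 : e' * f = 0) (hdec : e = f + e')
  (M N : cmod (1 : A))
  (hMN : ~ mod_iso M N) (hMs : ~ simple_mod M) (hNs : ~ simple_mod N)
  (hM : lemma8_cond e f M) (hN : lemma8_cond e f N) :
  forall L : cmod e, simple_mod L -> cact L f != 0 -> ext1_dim_gt1 L L.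
Proof.
move=> L hL hLf.
have hff : f * f = f by case: hf.
have hef : e * f = f by rewrite hdec mulrDl hff horth2 addr0.
have hfe : f * e = f by rewrite hdec mulrDr hff horth1 addr0.
have he2 : e * e = e := he.
have hd1 : cdim L = 1%N := L_dim1 he2 hL hbasic.
pose chi a := \tr (cact L a).
have Lsc : forall a, cact L a = (chi a)%:M by move=> a; apply: mx1_scalar.
have efe : e * f * e = f by rewrite hef hfe.
have hchi : is_char e f chi.
  split.
  - by move=> k a b; rewrite /chi (cact_lin L) mxtraceD mxtraceZ.
  - move=> a b; rewrite {1}/chi (cact_mul L) (Lsc (e * b * e)) (Lsc (e * a * e)).
    by rewrite -scalar_mxM tr_scalar1 // mulrC.
  - have c0 : chi f != 0.
      by apply: contraNneq hLf => h; rewrite Lsc h raddf0.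
    have := cact_mul L f f; rewrite efe hff Lsc -scalar_mxM.
    move/(congr1 mxtrace); rewrite !tr_scalar1 // -/(chi f) => /eqP.
    by rewrite -{1}[chi f]mulr1 eq_sym => /eqP /(mulfI c0).
have [mM [dM [F1M F2M F3M F4M cycM]]] := extract he2 hf hef hfe hbasic hMs hchi hM.
have [mN [dN [F1N F2N F3N F4N cycN]]] := extract he2 hf hef hfe hbasic hNs hchi hN.
pose D1 := fun a : A => (dM a)%:M : 'M[K]_(cdim L, cdim L).
pose D2 := fun a : A => (dN a)%:M : 'M[K]_(cdim L, cdim L).
have der : forall d : A -> K,
    (forall k a b, d (k *: (e * a * e) + e * b * e) = k * d (e * a * e) + d (e * b * e)) ->
    (forall a b, d ((e * a * e) * (e * b * e)) = d (e * b * e) * chi (e * a * e) + chi (e * b * e) * d (e * a * e)) ->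
    is_der (V := L) (W := L) (fun a => (d a)%:M).
  move=> d h1 h2; split.
    by move=> k a b; rewrite h1 raddfD /= scale_scalar_mx.
  move=> a b; rewrite h2 raddfD /= !Lsc -!scalar_mxM.
  by [].
exists D1, D2; split; [exact: der | exact: der |].
move=> c1 c2 [X hX].
have hz : forall a, c1 * dM (e * a * e) + c2 * dN (e * a * e) = 0.
  move=> a; have := hX a; rewrite Lsc scalar_mxC subrr /D1 /D2.
  rewrite !scale_scalar_mx -raddfD /= => /(congr1 mxtrace).
  by rewrite tr_scalar1 // mxtrace0.
have [a0 ha0] := F3M.
have [b0 hb0] := F3N.
case: (eqVneq c2 0) => [c20|c20].
  split => //; have := hz a0; rewrite c20 mul0r addr0 => /eqP.
  by rewrite mulf_eq0 (negbTE ha0) orbF => /eqP.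
exfalso.
case: (eqVneq c1 0) => [c10|c10].
  have := hz b0; rewrite c10 mul0r add0r => /eqP.
  by rewrite mulf_eq0 (negbTE c20) (negbTE hb0).
pose lam := - (c1 / c2).
have lam0 : lam != 0 by rewrite oppr_eq0 mulf_eq0 invr_eq0 negb_or c10 c20.
have rel : forall a, dN (e * a * e) = lam * dM (e * a * e).
  move=> a; have := hz a => /eqP; rewrite addrC addr_eq0 => /eqP h.
  apply: (mulfI c20); rewrite h /lam; field.
  by [].
have czf : forall y x, e * (e * y * x * f) * e = e * y * x * f.
  by move=> y x; rewrite !mulrA he2 -(mulrA _ f e) hfe.
apply: hMN; apply: (iso_of_ann cycM cycN) => x.
rewrite F4M F4N; split => h y hy.
  by rewrite -czf rel czf h // mulr0.
have := h y hy; rewrite -czf rel czf => /eqP; rewrite mulf_eq0 (negbTE lam0) /=.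
by move/eqP.
Qed.
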